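(* Call a positive integer $d$ admissible if either $d=1$, or $d$ can be written as $d=f\cdot\prod_{i=1}^{m}p_i^{2k_i}$ with $m\ge 1$, distinct primes $p_1<p_2<\dots<p_m$, integers $k_i\ge 0$, where $f=2$ if $p_1=2$ and $f=1$ if $p_1>2$, and where every $p_i$ divides $d$ (i.e. $k_i\ge 1$ for every $p_i>2$). For $d=1$ put $f=1$ and $s=1$; otherwise put $s=\prod_{i=1}^m p_i^{k_i}$ (so $d=f s^2$). Let $d$ be admissible and let $r$ be a positive integer such that (1) $r\ge \lceil \sqrt{f\,d/2}\,\rceil$, and (2) if $d>1$, then no prime divisor of $d$ divides $r$. Put $n=s\cdot r$ and $$a=2n+d=2sr+f s^2,\qquad b=2n+\frac{2n^2}{d}=2sr+\frac{2r^2}{f},\qquad c=b+d=2sr+\frac{2r^2}{f}+f s^2.$$ Then $(a,b,c)$ is an IDPT. Conversely, every IDPT $(a,b,c)$ arises in this way from some admissible $d$ and some positive integer $r$ satisfying (1) and (2) (namely with $d=c-b$).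
   Context: A Diophantine Pythagorean Triangle (DPT) is a triple $(a,b,c)$ of positive integers with $a<b<c$ and $a^2+b^2=c^2$. An Irreducible Diophantine Pythagorean Triangle (IDPT) is a DPT with $\gcd(a,b,c)=1$. $\lceil x\rceil$ denotes the smallest integer $\ge x$. *)

(* Defs.v *)
From mathcomp Require Import all_boot all_order all_algebra.
From mathcomp Require Import reals.
Set Implicit Arguments. Unset Strict Implicit. Unset Printing Implicit Defensive.
Import Order.TTheory GRing.Theory Num.Theory.

Definition DPT (a b c : nat) : Prop :=
  [/\ 0 < a, a < b, b < c & a ^ 2 + b ^ 2 = c ^ 2].

Definition IDPT (a b c : nat) : Prop := DPT a b c /\ gcdn (gcdn a b) c = 1.

Definition adm_rep (d f s : nat) : Prop :=
  (d = 1 /\ f = 1 /\ s = 1) \/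
  exists (m : nat) (ps ks : seq nat),
    [/\ 1 <= m, size ps = m, size ks = m, sorted ltn ps & all prime ps] /\
    [/\ (forall i, i < m -> 2 < nth 0 ps i -> 1 <= nth 0 ks i),
        f = (if nth 0 ps 0 == 2 then 2 else 1),
        d = f * \prod_(i < m) (nth 0 ps i) ^ (2 * nth 0 ks i)
      & s = \prod_(i < m) (nth 0 ps i) ^ (nth 0 ks i)].

Definition admissible (d : nat) : Prop := exists f s, adm_rep d f s.

Definition cond1 (R : realType) (f d r : nat) : Prop :=
  (Num.ceil (Num.sqrt ((f * d)%:R / 2 : R)) <= r%:Z)%R.

Definition cond2 (d r : nat) : Prop :=
  1 < d -> forall p, prime p -> p %| d -> ~~ (p %| r).

(* Main.v *)
Require Import Defs.
From mathcomp Require Import all_boot all_order all_algebra.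
From mathcomp Require Import reals.
From mathcomp Require Import zify.

Lemma gcd1_prime a b c p : gcdn (gcdn a b) c = 1 -> prime p ->
  p %| a -> p %| b -> p %| c -> False.
Proof.
move=> h pp pa pb pc.
have : p %| gcdn (gcdn a b) c by rewrite !dvdn_gcd pa pb pc.
by rewrite h dvdn1 => /eqP ep; rewrite ep in pp.
Qed.

Lemma coprime_by_primes x y :
  (forall p, prime p -> p %| x -> p %| y -> False) -> coprime x y.
Proof.
move=> h; rewrite /coprime; case: (ltngtP (gcdn x y) 1) => // hg.
- move: hg; rewrite ltnNge gcdn_gt0 negb_or -!eqn0Ngt => /andP[/eqP ex /eqP ey].
  by case: (h 2 isT); rewrite ?ex ?ey dvdn0.
- have pp := pdiv_prime hg.
  case: (h _ pp).
  + exact: dvdn_trans (pdiv_dvd _) (dvdn_gcdl _ _).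
  + exact: dvdn_trans (pdiv_dvd _) (dvdn_gcdr _ _).
Qed.

Lemma sq_of_coprime x y z : coprime x y -> x * y = z ^ 2 -> x = gcdn x z ^ 2.
Proof.
move=> cxy e; set g := gcdn x z.
apply/eqP; rewrite eqn_dvd; apply/andP; split.
- rewrite expnS expn1 /g muln_gcdl dvdn_gcd dvdn_mulr //=.
  rewrite muln_gcdr dvdn_gcd dvdn_mull //=.
  by rewrite mulnn -e dvdn_mulr.
- have cg : coprime (g ^ 2) y.
    rewrite coprimeXl //; exact: coprime_dvdl (dvdn_gcdl _ _) cxy.
  rewrite -(Gauss_dvdl x cg) e.
  by rewrite dvdn_exp2r // dvdn_gcdr.
Qed.

Lemma prod_sq m (F G : nat -> nat) :
  \prod_(i < m) F i ^ (2 * G i) = (\prod_(i < m) F i ^ G i) ^ 2.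
Proof.
rewrite expnS expn1 -big_split /=; apply: eq_bigr => i _.
by rewrite mul2n -addnn expnD.
Qed.

Lemma prod_primes_logn n : 0 < n ->
  \prod_(i < size (primes n)) nth 0 (primes n) i ^ nth 0 [seq logn p n | p <- primes n] i = n.
Proof.
move=> n0.
rewrite [RHS](prod_prime_decomp n0) prime_decompE big_map /=.
rewrite (big_nth 0) big_mkord; apply: eq_bigr => i _.
by rewrite (nth_map 0).
Qed.


Lemma adm_props d f s : adm_rep d f s ->
  [/\ d = f * s ^ 2, 0 < s & (f = 1 /\ odd s) \/ f = 2].
Proof.
case=> [[-> [-> ->]] | [m [ps [ks [[m1 hsz hks hsort hpr] [hk hf hd hs]]]]]].
  by split=> //; left.
have prm i : i < m -> prime (nth 0 ps i).
  by move=> im; apply: (allP hpr); rewrite mem_nth // hsz.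
have s0 : 0 < s.
  by rewrite hs; apply: prodn_gt0 => i; rewrite expn_gt0 prime_gt0 ?prm.
split=> //; first by rewrite hd hs prod_sq.
move: hf; case: eqP => h0 hf; [by right | left; split=> //].
have p0 : 2 < nth 0 ps 0.
  have := prime_gt1 (prm 0 m1); move: h0; lia.
have oddi i : i < m -> odd (nth 0 ps i).
  move=> im; case: (even_prime (prm i im)) => // e2.
  case: i im e2 => [|i] im e2; first by rewrite e2 in p0.
  have := sorted_ltn_nth ltn_trans 0 hsort 0 i.+1.
  rewrite !inE hsz => /(_ m1 im isT); rewrite e2; lia.
rewrite hs; apply: (big_ind odd) => //.
  by move=> x y ox oy; rewrite oddM ox oy.
by move=> i _; rewrite oddX oddi ?orbT.
Qed.

Lemma adm_odd s : odd s -> 1 < s -> adm_rep (s ^ 2) 1 s.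
Proof.
move=> os s1; right.
have s0 : 0 < s by lia.
have hp : pdiv s \in primes s.
  rewrite mem_primes pdiv_prime ?s0 ?pdiv_dvd //.
have m1 : 0 < size (primes s) by move: hp; case: (primes s).
exists (size (primes s)), (primes s), [seq logn p s | p <- primes s].
split.
  split. all: try by rewrite ?size_map ?sorted_primes ?all_prime_primes.
  exact: m1.
split.
- move=> i im _; rewrite (nth_map 0) // logn_gt0 mem_nth //.
- have : nth 0 (primes s) 0 \in primes s by rewrite mem_nth.
  rewrite mem_primes => /and3P[_ _ h2].
  case: eqP => // e; rewrite e in h2.
  by rewrite dvdn2 os in h2.
- by rewrite mul1n prod_sq prod_primes_logn.
- by rewrite prod_primes_logn.
Qed.

Lemma adm_two s : 0 < s -> adm_rep (2 * s ^ 2) 2 s.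
Proof.
move=> s0; right.
have [t ct ets] := pfactor_coprime (isT : prime 2) s0.
set k := logn 2 s in ets.
have t0 : 0 < t by move: s0; rewrite ets; case: t {ct ets}.
have ot : odd t by rewrite -coprime2n.
exists (size (primes t)).+1, (2 :: primes t), (k :: [seq logn p t | p <- primes t]).
split.
  split; rewrite /= ?size_map ?all_prime_primes //.
  rewrite path_sortedE; last exact: ltn_trans.
  rewrite sorted_primes andbT; apply/allP => p; rewrite mem_primes.
  case/and3P=> pp _ pt.
  case: (even_prime pp) => e; last exact: odd_prime_gt2 e pp.
  by rewrite e dvdn2 ot in pt.
split=> //.
- case=> [|i] //= im _; rewrite (nth_map 0) // logn_gt0 mem_nth //.
- rewrite big_ord_recl /=.
  under eq_bigr => i _ do rewrite add0n.
  rewrite prod_sq prod_primes_logn //. rewrite ets expnMn -expnM mulnC.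
  by rewrite (mulnC k) (mulnC (t ^ 2)) [LHS]mulnC.
- rewrite big_ord_recl /=.
  under eq_bigr => i _ do rewrite add0n.
  by rewrite prod_primes_logn // ets mulnC.
Qed.


Lemma gcd_by_primes a b c :
  (forall p, prime p -> p %| a -> p %| b -> p %| c -> False) -> gcdn (gcdn a b) c = 1.
Proof.
move=> h; apply/eqP; apply: coprime_by_primes => p pp.
rewrite dvdn_gcd => /andP[pa pb]; exact: h.
Qed.

Lemma prime2 p : prime p -> p %| 2 -> p = 2.
Proof. move=> pp /(@dvdn_leq p 2 isT) h; have := prime_gt1 pp; lia. Qed.

Lemma forward d f s r : adm_rep d f s -> 0 < r -> (f * d <= 2 * r ^ 2) -> cond2 d r ->
      IDPT (2 * s * r + f * s ^ 2)
           (2 * s * r + (2 * r ^ 2) %/ f)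
           (2 * s * r + (2 * r ^ 2) %/ f + f * s ^ 2).
Proof.
move=> /adm_props [hd s0 hf] r0 h1 h2; subst d.
case: hf => [[ef os]|ef]; subst f.
- rewrite divn1.
  have ne : s ^ 2 != 2 * r ^ 2.
    apply/eqP => e; have := congr1 odd e; rewrite oddX os oddM /=. by [].
  split; first split.
  + nia.
  + move: h1 ne => h1 /eqP ne; nia.
  + nia.
  + nia.
  apply: gcd_by_primes => p pp pa pb pc.
  have ps : p %| s.
    move: pc; rewrite (dvdn_addr _ pb) mul1n Euclid_dvdX //.
    by case/andP.
  have s1 : 1 < 1 * s ^ 2.
    have : s != 1 by apply/eqP => e; move: ps; rewrite e dvdn1 => /eqP e1; rewrite e1 in pp.
    move/eqP => ?; nia.
  have npr := h2 s1 p pp (dvdn_mull _ (@dvdn_exp 2 _ _ isT ps)).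
  have : p %| 2 * r ^ 2.
    by move: pb; rewrite (dvdn_addr _ (dvdn_mulr _ (dvdn_mull _ ps))).
  rewrite Euclid_dvdM // Euclid_dvdX // (negbTE npr) /= orbF.
  move/(@prime2 p pp) => e2; rewrite e2 dvdn2 os in ps; by [].
- have -> : (2 * r ^ 2) %/ 2 = r ^ 2 by rewrite mulKn.
  have s1 : 1 < 2 * s ^ 2 by nia.
  have n2 := h2 s1 2 isT (dvdn_mulr _ (dvdnn 2)).
  have ne : r ^ 2 != 2 * s ^ 2.
    apply/eqP => e; have := congr1 odd e; rewrite oddX oddM /= => /negbT.
    by rewrite -dvdn2 (negbTE n2).
  split; first split.
  + nia.
  + move: h1 ne => h1 /eqP ne; nia.
  + nia.
  + nia.
  apply: gcd_by_primes => p pp pa pb pc.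
  have pd : p %| 2 * s ^ 2 by move: pc; rewrite (dvdn_addr _ pb).
  have npr := h2 s1 p pp pd.
  have p2sr : p %| 2 * s * r.
    move: pd; rewrite Euclid_dvdM // => /orP[h|]; first by rewrite -mulnA dvdn_mulr.
    rewrite Euclid_dvdX // => /andP[h _]; by rewrite dvdn_mulr // dvdn_mull.
  move: pb; rewrite (dvdn_addr _ p2sr) Euclid_dvdX // (negbTE npr) //.
Qed.


Lemma converse a b c : IDPT a b c ->
      exists f s r : nat,
        [/\ adm_rep (c - b) f s, 0 < r, f * (c - b) <= 2 * r ^ 2, cond2 (c - b) r
          & [/\ a = 2 * s * r + f * s ^ 2,
                b = 2 * s * r + (2 * r ^ 2) %/ f
              & c = 2 * s * r + (2 * r ^ 2) %/ f + f * s ^ 2]].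
Proof.
move=> [[a0 ab bc pyth] g1].
have P p := @gcd1_prime a b c p g1.
have hc : c = b + (c - b) by lia.
move: hc; move: (c - b) => d hc; subst c.
have d0 : 0 < d by lia.
have e : a ^ 2 = d * (2 * b + d) by nia.
have pa p : prime p -> p %| d -> p %| a.
  move=> pp pd; have : p %| a ^ 2 by rewrite e dvdn_mulr.
  by rewrite Euclid_dvdX // andbT.
case: (boolP (odd d)) => od.
- have cop : coprime d (2 * b + d).
    apply: coprime_by_primes => p pp pd pu.
    move: pu; rewrite (dvdn_addl _ pd) Euclid_dvdM // => /orP[p2|pb].
      by move: pd; rewrite (@prime2 p pp p2) dvdn2 od.
    by apply: (P p pp (pa p pp pd) pb); rewrite dvdn_add.
  have [s hs] : exists s, d = s ^ 2 by exists (gcdn d a); exact: sq_of_coprime cop (esym e).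
  have [t ht] : exists t, 2 * b + d = t ^ 2.
    by exists (gcdn (2 * b + d) a); apply: (sq_of_coprime _ _ _ _ (etrans (mulnC _ _) (esym e))); rewrite coprime_sym.
  have hat : a = s * t.
    by apply/eqP; rewrite -(eqn_exp2r _ _ (isT : 0 < 2)) expnMn -hs -ht e.
  subst d.
  have os : odd s by move: od; rewrite oddX.
  have ot : odd t by move: ht => /(congr1 odd); rewrite oddX /= oddD oddM /= oddX os.
  have st : s < t by rewrite -(ltn_exp2r _ _ (isT : 0 < 2)); lia.
  have [r hr] : exists r, t = s + 2 * r.
    exists ((t - s)./2).
    have ev : ~~ odd (t - s) by rewrite oddB ?ot ?os //; lia.
    have := odd_double_half (t - s); rewrite (negbTE ev) add0n -mul2n; lia.
  subst t.
  have r0 : 0 < r by lia.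
  have hb : b = 2 * s * r + 2 * r ^ 2 by nia.
  have s0 : 0 < s by move: d0; case: (s) => // ?; rewrite expn0n.
  exists 1, s, r; split => //.
  + case: (ltngtP s 1) => [|s1|->]; first lia.
      exact: adm_odd.
    by left.
  + subst a b; nia.
  + move=> _ p pp; rewrite Euclid_dvdX // => /andP[ps _]; apply/negP => pr.
    case/dvdnP: ps => k ek; case/dvdnP: pr => l el.
    apply: (P p pp).
    * apply/dvdnP; exists (k * (s + 2 * r)); subst a; rewrite ek; nia.
    * apply/dvdnP; exists (2 * k * r + 2 * l * r); rewrite hb; subst s r; nia.
    * apply/dvdnP; exists (2 * k * r + 2 * l * r + k * s); rewrite hb; subst s r; nia.
  + rewrite divn1; clear -hat hb; subst a b; split; nia.
- have ob : odd b.
    apply/negPn/negP => eb.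
    have p2a : 2 %| a by apply: pa => //; rewrite dvdn2.
    by apply: (P 2 isT p2a); rewrite ?dvdn_add // dvdn2.
  have [h hd] : exists h, d = 2 * h.
    by exists d./2; have := odd_double_half d; rewrite (negbTE od) add0n -mul2n.
  subst d.
  have [a' ha] : exists a', a = 2 * a'.
    exists a./2; have := odd_double_half a.
    have : 2 %| a by apply: pa => //; rewrite dvdn_mulr.
    by rewrite dvdn2 => /negbTE ->; rewrite add0n -mul2n.
  subst a.
  have e' : a' ^ 2 = h * (b + h) by nia.
  have cop : coprime h (b + h).
    apply: coprime_by_primes => p pp ph pu.
    move: pu; rewrite (dvdn_addl _ ph) => pb.
    have pd : p %| 2 * h by rewrite dvdn_mull.
    by apply: (P p pp (pa p pp pd) pb); rewrite dvdn_add.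
  have [s hs] : exists s, h = s ^ 2 by exists (gcdn h a'); exact: sq_of_coprime cop (esym e').
  have [t ht] : exists t, b + h = t ^ 2.
    by exists (gcdn (b + h) a'); apply: (sq_of_coprime _ _ _ _ (etrans (mulnC _ _) (esym e'))); rewrite coprime_sym.
  have hat : a' = s * t.
    by apply/eqP; rewrite -(eqn_exp2r _ _ (isT : 0 < 2)) expnMn -hs -ht e'.
  subst h a'.
  have st : s < t by rewrite -(ltn_exp2r _ _ (isT : 0 < 2)); lia.
  have [r hr] : exists r, t = s + r by exists (t - s); lia.
  subst t.
  have r0 : 0 < r by lia.
  have hb : b = 2 * s * r + r ^ 2 by nia.
  have s0 : 0 < s by move: d0; case: (s) => // ?; rewrite expn0n muln0.
  have e2 : (2 * r ^ 2) %/ 2 = r ^ 2 by rewrite mulKn.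
  exists 2, s, r; rewrite e2; split => //.
  + exact: adm_two.
  + clear -ab hb; nia.
  + move=> _ p pp; rewrite Euclid_dvdM // => /orP[p2|].
      rewrite (@prime2 p pp p2); apply/negP => r2.
      have : 2 %| b by rewrite hb dvdn_add // ?(@dvdn_exp 2 2 r isT r2) // -mulnA dvdn_mulr.
      by rewrite dvdn2 ob.
    rewrite Euclid_dvdX // => /andP[ps _]; apply/negP => pr.
    case/dvdnP: ps => k ek; case/dvdnP: pr => l el.
    apply: (P p pp).
    * apply/dvdnP; exists (2 * k * (s + r)); subst s r; nia.
    * apply/dvdnP; exists (2 * k * r + l * r); rewrite hb; subst s r; nia.
    * apply/dvdnP; exists (2 * k * r + l * r + 2 * k * s); rewrite hb; subst s r; nia.
  + split; nia.
Qed.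


Section C1.
Import Order.TTheory GRing.Theory Num.Theory.
Local Open Scope ring_scope.
Lemma c1 (R : realType) (f d r : nat) :
  (Num.ceil (Num.sqrt ((f * d)%:R / 2 : R)) <= r%:Z)%R <-> (f * d <= 2 * r ^ 2)%N.
Proof.
rewrite ceil_le_int.
have -> : ((r%:Z)%:~R : R) = Num.sqrt (r%:R ^+ 2).
  by rewrite sqrtr_sqr ger0_norm.
rewrite ler_sqrt ?exprn_ge0 // ler_pdivrMr // -natrX.
rewrite -natrM ler_nat.
by rewrite [(r ^ 2 * 2)%N]mulnC.
Qed.
End C1.

Theorem theorem5 (R : realType) :
  (forall d f s r : nat,
      adm_rep d f s -> 0 < r -> cond1 R f d r -> cond2 d r ->
      IDPT (2 * s * r + f * s ^ 2)
           (2 * s * r + (2 * r ^ 2) %/ f)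
           (2 * s * r + (2 * r ^ 2) %/ f + f * s ^ 2)) /\
  (forall a b c : nat, IDPT a b c ->
      exists f s r : nat,
        [/\ adm_rep (c - b) f s, 0 < r, cond1 R f (c - b) r, cond2 (c - b) r
          & [/\ a = 2 * s * r + f * s ^ 2,
                b = 2 * s * r + (2 * r ^ 2) %/ f
              & c = 2 * s * r + (2 * r ^ 2) %/ f + f * s ^ 2]]).
Proof.
split.
- move=> d f s r ha r0 h1 h2; apply: (forward d f s r ha r0 _ h2).
  exact: (proj1 (c1 R f d r) h1).
- move=> a b c h; have [f [s [r [h1 h2 h3 h4 h5]]]] := converse a b c h.
  exists f, s, r; split => //.
  exact: (proj2 (c1 R f (c - b) r) h3).
Qed.
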